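(* Let $G$ be a graph, $b\ge 0$ an integer and $\beta:E(G)\to\{0,1,2,3\}$, and let $v\in V(G)$ be a vertex of degree one. Then $G-\{v\}$ admits a $b$-bend $\beta$-restricted RAC drawing (with $\beta$ restricted to $E(G-\{v\})$) if and only if $G$ admits a $b$-bend $\beta$-restricted RAC drawing.
   Context: All graphs are simple and undirected. A drawing of a graph $G=(V,E)$ maps vertices injectively to points of $\mathbb{R}^2$ and each edge $uv$ to a simple curve joining the images of $u$ and $v$, such that no vertex image lies in the relative interior of the image of an edge not incident to it. A polyline drawing is a drawing in which each edge is drawn as a union of closed straight-line segments $\lambda_1,\dots,\lambda_t$, where consecutive segments share exactly one endpoint and form an angle different from $180^\circ$, and non-consecutive segments are disjoint; the shared points of consecutive segments are the bends of the edge. A crossing of two edges is a common point of the relative interiors of their drawings; drawings have finitely many crossings. Two edges have a right-angle crossing if the crossing lies in the relative interiors of the respective segments and these segments are orthogonal. Given $b\in\mathbb{N}$ and $\beta:E\to\{0,1,2,3\}$, a $b$-bend $\beta$-restricted RAC drawing of $G$ is a polyline drawing in which every crossing is a right-angle crossing, the total number of bends is at most $b$, and each edge $e$ has at most $\beta(e)$ bends. *)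

(* Defs.v *)
From Stdlib Require Import Reals List.
From mathcomp Require Import all_boot.

Set Implicit Arguments.
Unset Strict Implicit.
Unset Printing Implicit Defensive.

Definition point : Type := (R * R)%type.

Definition in_cseg (p q x : point) : Prop :=
  exists t : R, Rle R0 t /\ Rle t R1 /\
    fst x = Rplus (fst p) (Rmult t (Rminus (fst q) (fst p))) /\
    snd x = Rplus (snd p) (Rmult t (Rminus (snd q) (snd p))).

Definition in_oseg (p q x : point) : Prop :=
  exists t : R, Rlt R0 t /\ Rlt t R1 /\
    fst x = Rplus (fst p) (Rmult t (Rminus (fst q) (fst p))) /\
    snd x = Rplus (snd p) (Rmult t (Rminus (snd q) (snd p))).

Definition orthogonal (p q p' q' : point) : Prop :=
  Rplus (Rmult (Rminus (fst q) (fst p)) (Rminus (fst q') (fst p')))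
        (Rmult (Rminus (snd q) (snd p)) (Rminus (snd q') (snd p'))) = R0.

Definition origin : point := (R0, R0).

(** A polyline is given by its list of points p_0, ..., p_k (k >= 1);
    its segments are lambda_i = [p_i, p_{i+1}] for i < k. *)
Definition pt (l : seq point) (i : nat) : point := nth origin l i.
Definition nsegs (l : seq point) : nat := (size l).-1.

Definition on_seg (l : seq point) (i : nat) (x : point) : Prop :=
  in_cseg (pt l i) (pt l i.+1) x.
Definition on_oseg (l : seq point) (i : nat) (x : point) : Prop :=
  in_oseg (pt l i) (pt l i.+1) x.

(* Well-formed polyline: nondegenerate segments, consecutive segments
   share exactly one endpoint and form an angle different from 180 degrees,
   non-consecutive segments are disjoint. *)
Definition polyline_ok (l : seq point) : Prop :=
  (1 < size l)%N /\
  (forall i, (i < nsegs l)%N -> pt l i <> pt l i.+1) /\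
  (forall i, (i.+1 < nsegs l)%N ->
     (forall x, on_seg l i x -> on_seg l i.+1 x -> x = pt l i.+1) /\
     ~ in_oseg (pt l i) (pt l i.+2) (pt l i.+1)) /\
  (forall i j, (i.+1 < j)%N -> (j < nsegs l)%N ->
     forall x, ~ (on_seg l i x /\ on_seg l j x)).

Definition on_curve (l : seq point) (x : point) : Prop :=
  exists i, (i < nsegs l)%N /\ on_seg l i x.

Definition on_rel_interior (l : seq point) (x : point) : Prop :=
  on_curve l x /\ x <> pt l 0 /\ x <> pt l (nsegs l).

Definition simple_graph (T : finType) (Vs : {set T}) (E : {set {set T}}) : Prop :=
  forall e, e \in E -> #|e| = 2 /\ e \subset Vs.

Definition del_vertex_V (T : finType) (Vs : {set T}) (v : T) : {set T} := Vs :\ v.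
Definition del_vertex_E (T : finType) (E : {set {set T}}) (v : T) : {set {set T}} :=
  [set e in E | v \notin e].

Definition degree (T : finType) (E : {set {set T}}) (v : T) : nat :=
  #|[set e in E | v \in e]|.

(* A drawing is given by vertex positions and, for every ordered pair (u,w)
   with {u,w} an edge, the list of bends of the edge traversed from u to w. *)
Record pdrawing (T : finType) := PDrawing {
  pos : T -> point;
  bends : T -> T -> seq point
}.

Definition edge_pts (T : finType) (D : pdrawing T) (u w : T) : seq point :=
  pos D u :: rcons (bends D u w) (pos D w).

Definition is_edge (T : finType) (E : {set {set T}}) (u w : T) : bool :=
  [set u; w] \in E.

Definition polyline_drawing (T : finType) (Vs : {set T}) (E : {set {set T}})
    (D : pdrawing T) : Prop :=
  (forall u w, u \in Vs -> w \in Vs -> pos D u = pos D w -> u = w) /\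
  (forall u w, is_edge E u w -> bends D w u = rev (bends D u w)) /\
  (forall u w, is_edge E u w -> polyline_ok (edge_pts D u w)) /\
  (forall u w z, is_edge E u w -> z \in Vs -> z != u -> z != w ->
      ~ on_curve (edge_pts D u w) (pos D z)) /\
  (* finitely many crossings *)
  (exists L : list point, forall u w u' w',
      is_edge E u w -> is_edge E u' w' -> [set u; w] != [set u'; w'] ->
      forall x, on_rel_interior (edge_pts D u w) x ->
                on_rel_interior (edge_pts D u' w') x -> List.In x L).

Definition all_crossings_RAC (T : finType) (E : {set {set T}}) (D : pdrawing T) : Prop :=
  forall u w u' w',
    is_edge E u w -> is_edge E u' w' -> [set u; w] != [set u'; w'] ->
    forall x, on_rel_interior (edge_pts D u w) x ->
              on_rel_interior (edge_pts D u' w') x ->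
    exists i j,
      (i < nsegs (edge_pts D u w))%N /\ (j < nsegs (edge_pts D u' w'))%N /\
      on_oseg (edge_pts D u w) i x /\ on_oseg (edge_pts D u' w') j x /\
      orthogonal (pt (edge_pts D u w) i) (pt (edge_pts D u w) i.+1)
                 (pt (edge_pts D u' w') j) (pt (edge_pts D u' w') j.+1).

(* total number of bends: every edge {u,w} is counted twice (as (u,w) and (w,u)) *)
Definition twice_total_bends (T : finType) (Vs : {set T}) (E : {set {set T}})
    (D : pdrawing T) : nat :=
  \sum_(u in Vs) \sum_(w in Vs | is_edge E u w) size (bends D u w).

Definition bRAC_drawing (T : finType) (Vs : {set T}) (E : {set {set T}})
    (b : nat) (beta : {set T} -> nat) (D : pdrawing T) : Prop :=
  polyline_drawing Vs E D /\
  all_crossings_RAC E D /\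
  (twice_total_bends Vs E D <= 2 * b)%N /\
  (forall u w, is_edge E u w -> (size (bends D u w) <= beta [set u; w])%N).

Definition admits_bRAC (T : finType) (Vs : {set T}) (E : {set {set T}})
    (b : nat) (beta : {set T} -> nat) : Prop :=
  exists D : pdrawing T, bRAC_drawing Vs E b beta D.

(* Main.v *)
Require Import Defs.
From Stdlib Require Import Reals List.
From mathcomp Require Import all_boot.
From Stdlib Require Import Lra Classical.

Set Implicit Arguments.
Unset Strict Implicit.
Unset Printing Implicit Defensive.

Section Geo.
Local Open Scope R_scope.

Lemma fin_small (I : finType) (Q : I -> R -> Prop) :
  (forall i, exists e, 0 < e /\ forall t, 0 < t <= e -> Q i t) ->
  exists e, 0 < e /\ forall i t, 0 < t <= e -> Q i t.
Proof.
move=> H.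
suff: forall l : seq I, exists e, 0 < e /\ forall i t, i \in l -> 0 < t <= e -> Q i t.
  case/(_ (enum I)) => e [he H']; exists e; split => // i t ht.
  by apply: H' => //; rewrite mem_enum.
elim=> [|j l [e [he IH]]].
  by exists 1; split; [lra| move=> i t].
have [e' [he' Hj]] := H j.
exists (Rmin e e'); split; first by apply: Rmin_glb_lt.
move=> i t; rewrite in_cons => /orP [/eqP -> | hi] ht.
  by apply: Hj; have := Rmin_r e e'; lra.
by apply: IH => //; have := Rmin_l e e'; lra.
Qed.

Lemma nat_small (n : nat) (Q : nat -> R -> Prop) :
  (forall k, (k < n)%N -> exists e, 0 < e /\ forall t, 0 < t <= e -> Q k t) ->
  exists e, 0 < e /\ forall k t, (k < n)%N -> 0 < t <= e -> Q k t.
Proof.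
elim: n => [|n IH] H.
  by exists 1; split; [lra| move=> k t].
have [e [he Hn]] := IH (fun k hk => H k (ltnW hk)).
have [e' [he' Hj]] := H n (ltnSn n).
exists (Rmin e e'); split; first by apply: Rmin_glb_lt.
move=> k t; rewrite ltnS leq_eqVlt => /orP [/eqP -> | hi] ht.
  by apply: Hj; have := Rmin_r e e'; lra.
by apply: Hn => //; have := Rmin_l e e'; lra.
Qed.

Definition good (w1 w2 e : R) := (w1 = 0 /\ w2 = 0) \/ w2 - e * w1 <> 0.

Lemma good_dir (w1 w2 : R) : exists e0, 0 < e0 /\ forall e, 0 < e <= e0 -> good w1 w2 e.
Proof.
rewrite /good.
destruct (Req_dec w1 0) as [H1|H1].
  destruct (Req_dec w2 0) as [H2|H2].
    by exists 1; split; [lra| left].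
  exists 1; split; [lra|]; move=> e he; right; rewrite H1; lra.
set r := w2 / w1.
have Hw2 : w2 = r * w1 by rewrite /r; field.
destruct (Rle_lt_dec r 0) as [Hr|Hr].
  exists 1; split; [lra|]; move=> e he; right; rewrite Hw2 => Heq.
  have : (r - e) * w1 = 0 by lra.
  case/Rmult_integral; lra.
exists (r / 2); split; [lra|]; move=> e he; right; rewrite Hw2 => Heq.
have : (r - e) * w1 = 0 by lra.
case/Rmult_integral; lra.
Qed.

Definition hitp (c : point) (e t : R) : point := (fst c + t, snd c + t * e).

Lemma hit_uniq (a b c : point) (e t1 t2 : R) :
  good (fst b - fst a) (snd b - snd a) e ->
  in_cseg a b (hitp c e t1) -> in_cseg a b (hitp c e t2) -> t1 = t2.
Proof.
rewrite /good /hitp => G [s1 [_ [_ [H1 H2]]]] [s2 [_ [_ [H3 H4]]]]; simpl in *.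
have E1 : t1 - t2 = (s1 - s2) * (fst b - fst a) by lra.
have E2 : (t1 - t2) * e = (s1 - s2) * (snd b - snd a) by lra.
case: G => [[G1 G2]|G].
  by rewrite G1 in E1; lra.
have : (s1 - s2) * ((snd b - snd a) - e * (fst b - fst a)) = 0.
  replace ((s1 - s2) * ((snd b - snd a) - e * (fst b - fst a))) with
    ((s1 - s2) * (snd b - snd a) - e * ((s1 - s2) * (fst b - fst a))) by ring.
  by rewrite -E1 -E2; ring.
case/Rmult_integral => [Hs|//].
have : s1 = s2 by lra.
move=> Hs'; rewrite Hs' in E1; lra.
Qed.

Lemma seg_small (a b c : point) (e : R) :
  good (fst b - fst a) (snd b - snd a) e ->
  exists t0, 0 < t0 /\ forall t, 0 < t <= t0 -> ~ in_cseg a b (hitp c e t).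
Proof.
move=> G.
destruct (classic (exists t0, 0 < t0 /\ in_cseg a b (hitp c e t0))) as [[t0 [h0 Hh]]|Hn].
  exists (t0 / 2); split; [lra|]; move=> t ht Hit.
  have := hit_uniq G Hit Hh; lra.
exists 1; split; [lra|]; move=> t ht Hit; apply: Hn; exists t; split => //; lra.
Qed.

Lemma escape (I : finType) (N : I -> nat) (A B : I -> nat -> point) (c : point) :
  exists e tau, 0 < tau /\ forall i k t, (k < N i)%N -> 0 < t <= tau ->
    ~ in_cseg (A i k) (B i k) (hitp c e t).
Proof.
have [e0 [he0 He]] : exists e0, 0 < e0 /\ forall i e, 0 < e <= e0 ->
    forall k, (k < N i)%N -> good (fst (B i k) - fst (A i k)) (snd (B i k) - snd (A i k)) e.
  apply: (fin_small (Q := fun i e => forall k, (k < N i)%N ->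
     good (fst (B i k) - fst (A i k)) (snd (B i k) - snd (A i k)) e)) => i.
  have [e [he Hk]] := nat_small (n := N i) (Q := fun k e =>
     good (fst (B i k) - fst (A i k)) (snd (B i k) - snd (A i k)) e)
     (fun k _ => good_dir _ _).
  by exists e; split => // t ht k hk; apply: Hk.
have He0 : forall i k, (k < N i)%N -> good (fst (B i k) - fst (A i k)) (snd (B i k) - snd (A i k)) e0.
  by move=> i k hk; apply: He => //; lra.
have [tau [ht Ht]] := fin_small (Q := fun i t => forall k, (k < N i)%N ->
   ~ in_cseg (A i k) (B i k) (hitp c e0 t)) (fun i =>
   let: ex_intro e (conj he Hk) := nat_small (n := N i) (Q := fun k t =>
      ~ in_cseg (A i k) (B i k) (hitp c e0 t)) (fun k hk => seg_small c (He0 i k hk))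
   in ex_intro _ e (conj he (fun t h k hk => Hk k t hk h))).
by exists e0, tau; split => // i k t hk htt; apply: Ht.
Qed.

End Geo.
Lemma isE' (T : finType) (E : {set {set T}}) (v x y : T) :
  x != v -> y != v -> is_edge (del_vertex_E E v) x y = is_edge E x y.
Proof.
move=> hx hy; rewrite /is_edge /del_vertex_E inE !inE.
by rewrite (eq_sym v x) (eq_sym v y) (negbTE hx) (negbTE hy) andbT.
Qed.

Lemma isE'_inv (T : finType) (E : {set {set T}}) (v x y : T) :
  is_edge (del_vertex_E E v) x y -> [/\ x != v, y != v & is_edge E x y].
Proof.
rewrite /is_edge /del_vertex_E inE !inE => /andP [-> ].
by rewrite negb_or (eq_sym v x) (eq_sym v y) => /andP [-> ->].
Qed.

Lemma decomp (T : finType) (Vs : {set T}) (E : {set {set T}}) (v : T) (D : pdrawing T) :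
  v \in Vs ->
  twice_total_bends Vs E D =
  (\sum_(y in Vs | is_edge E v y) size (bends D v y) +
   \sum_(x in Vs :\ v) ((if is_edge E x v then size (bends D x v) else 0) +
     \sum_(y in Vs :\ v | is_edge (del_vertex_E E v) x y) size (bends D x y)))%N.
Proof.
move=> Hv; rewrite /twice_total_bends (big_setD1 v Hv) /=; congr (_ + _)%N.
apply: eq_bigr => x; rewrite !inE => /andP [hx _].
rewrite big_mkcondr (big_setD1 v Hv) /=; congr (_ + _)%N.
rewrite [RHS]big_mkcondr; apply: eq_bigr => y; rewrite !inE => /andP [hy _].
by rewrite isE'.
Qed.

Lemma polyline_ok2 (a b : point) : a <> b -> polyline_ok [:: a; b].
Proof.
move=> hab; split => //; split.
  by move=> [|i] //.
by split; move=> [|i] // [|[|j]].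
Qed.

Lemma on_curve2 (a b q : point) : on_curve [:: a; b] q -> in_cseg a b q.
Proof. by case=> [[|i]] [] //. Qed.

Lemma cseg_refl (a : point) : in_cseg a a a.
Proof.
exists R0; split; [lra|split; [lra|]]; split; ring.
Qed.

Section S2.
Local Open Scope R_scope.
Lemma seg_hit (c q : point) (e tau : R) : 0 < tau ->
  in_cseg c (hitp c e tau) q \/ in_cseg (hitp c e tau) c q ->
  q = c \/ exists t, 0 < t <= tau /\ q = hitp c e t.
Proof.
move=> ht; case: q c => q1 q2 [c1 c2]; rewrite /hitp /=.
case=> [[s [hs0 [hs1 [H1 H2]]]] | [s [hs0 [hs1 [H1 H2]]]]]; simpl in *.
  destruct (Req_dec s 0) as [->|hs].
    by left; f_equal; lra.
  right; exists (s * tau); split; first by split; nra.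
  by f_equal; [lra| rewrite H2; ring].
destruct (Req_dec s 1) as [->|hs].
  by left; f_equal; lra.
right; exists ((1 - s) * tau); split; first by split; nra.
by f_equal; [lra| rewrite H2; ring].
Qed.
End S2.

Unset Implicit Arguments.

Theorem mainTheorem2 (T : finType) (Vs : {set T}) (E : {set {set T}})
    (b : nat) (beta : {set T} -> nat) (v : T) :
  simple_graph Vs E ->
  (forall e, e \in E -> (beta e <= 3)%N) ->
  v \in Vs ->
  degree E v = 1%N ->
  admits_bRAC (del_vertex_V Vs v) (del_vertex_E E v) b beta <->
  admits_bRAC Vs E b beta.
Proof.
move=> Hs Hb Hv Hdeg.
have [u [huv HuE Huniq]] : exists u, [/\ u != v, [set u; v] \in E &
    forall e, e \in E -> v \in e -> e = [set u; v]].
  move: Hdeg; rewrite /degree => /eqP /cards1P [e0 He0].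
  have : e0 \in [set e in E | v \in e] by rewrite He0 set11.
  rewrite inE => /andP [e0E ve0].
  have /cards2P [x [y [hxy De0]]] : #|e0| == 2 by apply/eqP; case: (Hs _ e0E).
  have Hu : forall e, e \in E -> v \in e -> e = e0.
    by move=> e eE ve; apply/set1P; rewrite -He0 inE eE ve.
  move: ve0; rewrite De0 !inE => /orP [/eqP vx | /eqP vy].
    exists y; split.
    - by rewrite vx eq_sym.
    - by rewrite setUC vx -De0.
    - by move=> e eE ve; rewrite (Hu e eE ve) De0 vx setUC.
  exists x; split.
  - by rewrite vy.
  - by rewrite vy -De0.
  - by move=> e eE ve; rewrite (Hu e eE ve) De0 vy.
have HE_v : forall y, is_edge E v y -> y = u.
  move=> y; rewrite /is_edge => H.
  have Hy := Huniq _ H (setU11 _ _).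
  have [Hc _] := Hs _ H; move: Hc; rewrite cards2 => -[Hc].
  have : y \in [set u; v] by rewrite -Hy !inE eqxx orbT.
  rewrite !inE => /orP [/eqP // | /eqP yv].
  by rewrite yv eqxx in Hc.
have HE_v' : forall x, is_edge E x v -> x = u.
  by move=> x; rewrite /is_edge setUC; exact: HE_v.
have Hcls : forall x y, is_edge E x y ->
    [\/ [/\ x != v, y != v & is_edge (del_vertex_E E v) x y], (x = u /\ y = v) | (x = v /\ y = u)].
  move=> x y H; case: (eqVneq x v) => [xv|xv].
    by apply: Or33; split => //; apply: HE_v; rewrite -xv.
  case: (eqVneq y v) => [yv|yv].
    by apply: Or32; split => //; apply: HE_v'; rewrite -yv.
  by apply: Or31; split => //; rewrite isE'.
have inVs' : forall z, z != v -> z \in Vs -> z \in del_vertex_V Vs v.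
  by move=> z hz hzV; rewrite /del_vertex_V !inE hz.
split => [[D [[Hinj [Hsym [Hpoly [Hvert [L HL]]]]] [Hrac [Htb Hbeta]]]] |
          [D [[Hinj [Hsym [Hpoly [Hvert [L HL]]]]] [Hrac [Htb Hbeta]]]]]; last first.
  exists D; split; [split; [|split; [|split; [|split]]]|split; [|split]].
  - move=> x y; rewrite /del_vertex_V !inE => /andP[_ hx] /andP[_ hy]; exact: Hinj.
  - by move=> x y /isE'_inv [_ _ H]; exact: Hsym.
  - by move=> x y /isE'_inv [_ _ H]; exact: Hpoly.
  - move=> x y z /isE'_inv [_ _ H]; rewrite /del_vertex_V !inE => /andP [_ hz].
    exact: Hvert.
  - by exists L => x y x' y' /isE'_inv[_ _ H] /isE'_inv[_ _ H']; exact: HL.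
  - by move=> x y x' y' /isE'_inv[_ _ H] /isE'_inv[_ _ H']; exact: Hrac.
  - apply: leq_trans Htb; rewrite (@decomp _ _ E _ D Hv) /twice_total_bends /del_vertex_V.
    apply: leq_trans (leq_addl _ _); apply: leq_sum => x _; exact: leq_addl.
  - by move=> x y /isE'_inv[_ _ H]; exact: Hbeta.
have uVs : u \in Vs by have [_ /subsetP S] := Hs _ HuE; apply: S; rewrite !inE eqxx.
pose c := Defs.pos D u.
have [e [tau [htau Hesc]]] := escape
  (fun i : ((T * T) + T)%type => match i with inl xy => nsegs (edge_pts D xy.1 xy.2) | inr _ => 1%N end)
  (fun i k => match i with inl xy => pt (edge_pts D xy.1 xy.2) k | inr z => Defs.pos D z end)
  (fun i k => match i with inl xy => pt (edge_pts D xy.1 xy.2) k.+1 | inr z => Defs.pos D z end) c.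
have htau' : Rlt R0 tau /\ Rle tau tau by split; [exact: htau| exact: Rle_refl].
have Hvx : forall z t, Rlt R0 t /\ Rle t tau -> hitp c e t <> Defs.pos D z.
  move=> z t ht Heq; apply: (Hesc (inr z) 0%N t) => //=.
  rewrite Heq; exact: cseg_refl.
have Hed : forall x y t, Rlt R0 t /\ Rle t tau -> ~ on_curve (edge_pts D x y) (hitp c e t).
  by move=> x y t ht [i [hi Hon]]; exact: (Hesc (inl (x, y)) i t hi ht Hon).
pose p := hitp c e tau.
have Hp : c <> p by move=> /(f_equal fst) /=; lra.
have Hrel : forall q, on_rel_interior [:: c; p] q \/ on_rel_interior [:: p; c] q ->
    exists t, (Rlt R0 t /\ Rle t tau) /\ q = hitp c e t.
  move=> q [[Hc [Hq0 Hq1]] | [Hc [Hq0 Hq1]]].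
    by case: (seg_hit htau (or_introl (on_curve2 Hc))).
  by case: (seg_hit htau (or_intror (on_curve2 Hc))).
pose D' := PDrawing (fun z => if z == v then p else Defs.pos D z)
  (fun x y => if (x == v) || (y == v) then [::] else bends D x y).
have EP : forall x y, x != v -> y != v -> edge_pts D' x y = edge_pts D x y.
  by move=> x y hx hy; rewrite /edge_pts /= (negbTE hx) (negbTE hy).
have EPuv : edge_pts D' u v = [:: c; p].
  by rewrite /edge_pts /= eqxx orbT (negbTE huv).
have EPvu : edge_pts D' v u = [:: p; c].
  by rewrite /edge_pts /= eqxx /= (negbTE huv).
have NoX : forall x y x' y', is_edge E x y -> is_edge E x' y' -> [set x; y] != [set x'; y'] ->
    forall q, on_rel_interior (edge_pts D' x y) q -> on_rel_interior (edge_pts D' x' y') q ->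
    [/\ x != v, y != v, x' != v & y' != v] /\
    is_edge (del_vertex_E E v) x y /\ is_edge (del_vertex_E E v) x' y'.
  move=> x y x' y' H H' Hne q Hq Hq'.
  case: (Hcls x y H) => [[hx hy H1]|[Ex Ey]|[Ex Ey]];
  case: (Hcls x' y' H') => [[hx' hy' H1']|[Ex' Ey']|[Ex' Ey']].
  - by [].
  - rewrite Ex' Ey' EPuv in Hq'; rewrite EP // in Hq.
    have [t [ht Hqt]] := Hrel q (or_introl Hq').
    by case: (Hed x y t ht); rewrite -Hqt; case: Hq.
  - rewrite Ex' Ey' EPvu in Hq'; rewrite EP // in Hq.
    have [t [ht Hqt]] := Hrel q (or_intror Hq').
    by case: (Hed x y t ht); rewrite -Hqt; case: Hq.
  - rewrite Ex Ey EPuv in Hq; rewrite EP // in Hq'.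
    have [t [ht Hqt]] := Hrel q (or_introl Hq).
    by case: (Hed x' y' t ht); rewrite -Hqt; case: Hq'.
  - by rewrite Ex Ey Ex' Ey' eqxx in Hne.
  - by rewrite Ex Ey Ex' Ey' setUC eqxx in Hne.
  - rewrite Ex Ey EPvu in Hq; rewrite EP // in Hq'.
    have [t [ht Hqt]] := Hrel q (or_intror Hq).
    by case: (Hed x' y' t ht); rewrite -Hqt; case: Hq'.
  - by rewrite Ex Ey Ex' Ey' setUC eqxx in Hne.
  - by rewrite Ex Ey Ex' Ey' eqxx in Hne.
exists D'; split; [split; [|split; [|split; [|split]]]|split; [|split]].
- move=> x y hx hy /=.
  case: (eqVneq x v) => [->|xv]; case: (eqVneq y v) => [->|yv] //;
    rewrite ?eqxx ?(negbTE xv) ?(negbTE yv).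
  + by move=> H; case: (Hvx y tau htau').
  + by move=> H; case: (Hvx x tau htau'); rewrite H.
  + by apply: Hinj; apply: inVs'.
- move=> x y H /=.
  case: (Hcls x y H) => [[hx hy H']|[-> ->]|[-> ->]].
  + by rewrite (negbTE hx) (negbTE hy); exact: Hsym.
  + by rewrite eqxx orbT.
  + by rewrite eqxx orbT.
- move=> x y H.
  case: (Hcls x y H) => [[hx hy H']|[-> ->]|[-> ->]].
  + by rewrite EP //; exact: Hpoly.
  + by rewrite EPuv; apply: polyline_ok2.
  + by rewrite EPvu; apply: polyline_ok2 => H1; apply: Hp.
- move=> x y z H hz zx zy /=.
  case: (Hcls x y H) => [[hx hy H']|[Ex Ey]|[Ex Ey]].
  + rewrite EP //; case: (eqVneq z v) => [Ez|zv].
      exact: Hed.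
    by apply: Hvert => //; apply: inVs'.
  + rewrite Ex Ey in zx zy *; rewrite EPuv (negbTE zy) => /on_curve2 Hc.
    case: (seg_hit htau (or_introl Hc)) => [Hq|[t [ht Hq]]].
      by move/negP: zx; apply; apply/eqP; apply: Hinj; [apply: inVs'|apply: inVs'|exact: Hq].
    by case: (Hvx z t ht).
  + rewrite Ex Ey in zx zy *; rewrite EPvu (negbTE zx) => /on_curve2 Hc.
    case: (seg_hit htau (or_intror Hc)) => [Hq|[t [ht Hq]]].
      by move/negP: zy; apply; apply/eqP; apply: Hinj; [apply: inVs'|apply: inVs'|exact: Hq].
    by case: (Hvx z t ht).
- exists L => x y x' y' H H' Hne q Hq Hq'.
  have [[hx hy hx' hy'] [H1 H2]] := NoX x y x' y' H H' Hne q Hq Hq'.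
  rewrite (EP x y) // (EP x' y') // in Hq Hq'.
  exact: (HL x y x' y' H1 H2 Hne q Hq Hq').
- move=> x y x' y' H H' Hne q Hq Hq'.
  have [[hx hy hx' hy'] [H1 H2]] := NoX x y x' y' H H' Hne q Hq Hq'.
  rewrite (EP x y) // (EP x' y') // in Hq Hq' *.
  exact: (Hrac x y x' y' H1 H2 Hne q Hq Hq').
- apply: leq_trans Htb; rewrite (@decomp _ _ E _ D' Hv) big1 ?add0n => [|y _]; last first.
    by rewrite /= eqxx.
  rewrite /twice_total_bends /del_vertex_V leq_eqVlt; apply/orP; left; apply/eqP.
  apply: eq_bigr => x; rewrite !inE => /andP [hx _].
  rewrite /= eqxx orbT if_same add0n.
  apply: eq_bigr => y /andP [hy' _]; move: hy'; rewrite !inE => /andP [hy _].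
  by rewrite (negbTE hx) (negbTE hy).
- move=> x y H /=.
  case: (Hcls x y H) => [[hx hy H']|[-> ->]|[-> ->]].
  + by rewrite (negbTE hx) (negbTE hy); exact: Hbeta.
  + by rewrite eqxx orbT.
  + by rewrite eqxx.
Qed.
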